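(* For $i = 0,\dots,2^n-1$, the row $i$ word $m_i(n)$ in the matrix $M_n$ (the $i$-th Gray code word of length $n$) is equal to $\lambda_0([i]_2^R)^R$, where $R$ denotes word reversal and $[i]_2$ is the length $n$ binary representation of $i$ with the least significant digit first (including leading zeros, if necessary).
   Context: Let $X_2=\{0,1\}$. Define matrices $M_n$ of size $2^n \times n$ with entries in $X_2$ recursively by \[ M_1 = \begin{bmatrix} 0 \\ 1 \end{bmatrix}, \qquad M_{n+1} = \begin{bmatrix} M_n & 0_n \\ M_n^R & 1_n \end{bmatrix}, \] where $M_n^R$ is obtained from $M_n$ by reversing the order of its rows, and $0_n$, $1_n$ are column vectors with $2^n$ entries all equal to $0$, $1$ respectively; rows are indexed from $0$. The binary tree automorphisms $\lambda_0,\lambda_1$ (the states of the transducer generating the lamplighter group) are defined recursively by $\lambda_0(0w)=0\,\lambda_0(w)$, $\lambda_0(1w)=1\,\lambda_1(w)$, $\lambda_1(0w)=1\,\lambda_0(w)$, $\lambda_1(1w)=0\,\lambda_1(w)$, and $\lambda_0(\emptyset)=\lambda_1(\emptyset)=\emptyset$. *)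

(* Defs.v *)
From mathcomp Require Import all_boot.
Set Implicit Arguments. Unset Strict Implicit. Unset Printing Implicit Defensive.

(* Alphabet X_2 = {0,1} encoded as bool (0 = false, 1 = true).
   A matrix over X_2 is represented by its list of rows (row 0 first),
   each row being a word (seq bool), leftmost column first. *)

(* Rows of M_n.  M_0 := [[]] is only an auxiliary base case: it makes
   Mrows 1 = [:: [:: false]; [:: true]] = M_1 by computation, and
   M_{n+1} = [ M_n 0_n ; M_n^R 1_n ]. *)
Fixpoint Mrows (n : nat) : seq (seq bool) :=
  match n with
  | 0 => [:: [::]]
  | k.+1 => [seq rcons r false | r <- Mrows k] ++
            [seq rcons r true  | r <- rev (Mrows k)]
  end.

Definition mrow (n i : nat) : seq bool := nth [::] (Mrows n) i.

Lemma Mrows1 : Mrows 1 = [:: [:: false]; [:: true]].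
Proof. by []. Qed.

(* The lamplighter transducer states lambda_0 (s = false), lambda_1 (s = true):
   reading letter a in state s outputs s xor a and moves to state a. *)
Fixpoint lam (s : bool) (w : seq bool) : seq bool :=
  match w with
  | [::] => [::]
  | a :: w' => (addb s a) :: lam a w'
  end.

Definition lambda0 := lam false.
Definition lambda1 := lam true.

Definition bin (n i : nat) : seq bool := mkseq (fun k => odd (i %/ 2 ^ k)) n.

(* Main.v *)
Require Import Defs.
From mathcomp Require Import all_boot.
From mathcomp Require Import zify.

Fixpoint g (w : seq bool) : seq bool :=
  match w with
  | [::] => [::]
  | a :: w' => (addb a (head false w')) :: g w'
  end.

Lemma lam_rcons s u a : lam s (rcons u a) = rcons (lam s u) (addb (last s u) a).
Proof. by elim: u s => [|b u IH] s //=; rewrite IH. Qed.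

Lemma gE w : rev (lambda0 (rev w)) = g w.
Proof.
elim: w => [|a w IH] //=.
rewrite rev_cons /lambda0 lam_rcons rev_rcons -/lambda0 IH.
congr (_ :: _); case: w {IH} => [|b w] /=; first by rewrite addbC.
by rewrite rev_cons last_rcons addbC.
Qed.

Lemma g_rcons0 w : g (rcons w false) = rcons (g w) false.
Proof.
elim: w => [|a w IH] //=; rewrite IH; congr (_ :: _).
by case: w {IH}.
Qed.

Lemma g_rcons1 w : g (rcons w true) = rcons (g (map negb w)) true.
Proof.
elim: w => [|a w IH] //=.
rewrite IH; congr (_ :: _); case: w {IH} => [|b w] /=; by case: a => //; case: b.
Qed.

Lemma size_Mrows n : size (Mrows n) = 2 ^ n.
Proof.
elim: n => [|n IH] //=.
by rewrite size_cat !size_map size_rev IH expnS mul2n addnn.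
Qed.

Lemma binS n i : bin n.+1 i = rcons (bin n i) (odd (i %/ 2 ^ n)).
Proof.
by rewrite /bin /mkseq -[n.+1]addn1 iotaD map_cat cats1 add0n.
Qed.

Lemma binSl n i : bin n.+1 i = odd i :: bin n (i %/ 2).
Proof.
rewrite /bin /mkseq /= expn0 divn1; congr (_ :: _).
have -> : iota 1 n = map (addn 1) (iota 0 n) by rewrite -iotaDl.
rewrite -map_comp; apply: eq_map => k /=.
by rewrite expnS divnMA.
Qed.

Lemma bin_shift n k : bin n (2 ^ n + k) = bin n k.
Proof.
rewrite /bin /mkseq; apply/eq_in_map => j; rewrite mem_iota add0n => /andP [_ hj].
have -> : 2 ^ n = 2 ^ (n - j) * 2 ^ j by rewrite -expnD subnK // ltnW.
rewrite divnMDl ?expn_gt0 // oddD oddX.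
by have -> : (n - j == 0) = false by apply/eqP; lia.
Qed.

Lemma bin_neg n k : k < 2 ^ n -> bin n (2 ^ n - 1 - k) = map negb (bin n k).
Proof.
elim: n k => [|n IH] k hk //.
rewrite !binSl /=.
set p := 2 ^ n.
have hp : 2 ^ n.+1 = p * 2 by rewrite expnS mulnC.
move: hk; rewrite hp => hk.
have hq : k %/ 2 < p by rewrite ltn_divLR.
have hkd := divn_eq k 2.
have hb : k %% 2 < 2 by rewrite ltn_mod.
have E : p * 2 - 1 - k = (p - 1 - k %/ 2) * 2 + (1 - k %% 2) by lia.
rewrite E divnMDl // (divn_small (_ : 1 - k %% 2 < 2)); last by lia.
rewrite addn0 IH //; congr (_ :: _).
rewrite {3}hkd !oddD !oddM !andbF /=.
by case: (k %% 2) hb => [|[|]].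
Qed.

Lemma main_gen n i : i < 2 ^ n -> mrow n i = g (bin n i).
Proof.
elim: n i => [|n IH] i hi.
  by case: i hi.
rewrite binS /mrow /=.
have hp : 2 ^ n.+1 = 2 ^ n + 2 ^ n by rewrite expnS mul2n addnn.
case: (ltnP i (2 ^ n)) => h.
  rewrite nth_cat size_map size_Mrows h (nth_map [::]) ?size_Mrows //.
  by rewrite divn_small // g_rcons0 -IH.
rewrite nth_cat size_map size_Mrows ltnNge h /=.
set k := i - 2 ^ n.
have hk : k < 2 ^ n by rewrite /k; lia.
have hi' : i = 2 ^ n + k by rewrite /k; lia.
rewrite (nth_map [::]) ?size_rev ?size_Mrows // nth_rev ?size_Mrows //.
rewrite hi' bin_shift divnDl ?dvdnn // divnn expn_gt0 /= divn_small // g_rcons1.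
rewrite -bin_neg // -IH; last by lia.
by rewrite /mrow; congr (rcons (nth _ _ _) _); lia.
Qed.

Theorem mainTheorem11 (n i : nat) :
  1 <= n -> i < 2 ^ n ->
  mrow n i = rev (lambda0 (rev (bin n i))).
Proof. by move=> _ hi; rewrite gE main_gen. Qed.
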